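(* Let $j\ge2$ be an integer and $\lambda>0$. For every integer $n\ge\max\{\lceil\lambda^{-1}\rceil,\,j-2\}$ we have $$\lambda_{n,j}(\lambda)\ge\frac{\lambda}{(1+\lambda)^{j-1}}.$$ Moreover, $$\lim_{n\to\infty}\widehat\lambda_{n,j-1}(\lambda)=\lim_{n\to\infty}\lambda_{n,j}(\lambda)=\frac{\lambda}{(1+\lambda)^{j-1}}.$$
   Context: For an integer $n\ge1$ let $f_n(x)=(1+x)^{n+1}/x$ for $x>0$. The function $f_n$ is strictly decreasing on $(0,1/n]$ and strictly increasing on $[1/n,\infty)$. Regular graph exponents (Schmidt–Summerer), defined algebraically. For $\lambda\in[1/n,\infty)$ let $\mu\in(0,1/n]$ be the unique solution of $f_n(\mu)=f_n(\lambda)$, and set $$\lambda_{n,j}(\lambda)=\lambda^{1-\frac{j-1}{n+1}}\mu^{\frac{j-1}{n+1}},\qquad 1\le j\le n+2 .$$ Thus $\lambda_{n,1}=\lambda$, $\lambda_{n,n+2}=\mu$, and all ratios $\lambda_{n,j}/\lambda_{n,j+1}$ are equal. For $\lambda=\infty$ put $\lambda_{n,1}=\infty$, $\lambda_{n,2}=1$ and $\lambda_{n,j}=0$ for $j\ge3$. Put $\widehat\lambda_{n,j}(\lambda):=\lambda_{n,j+1}(\lambda)$ for $1\le j\le n+1$, and $\widehat\lambda_n(\lambda):=\lambda_{n,2}(\lambda)$. These are the exponents of the regular graph in dimension $n$ with parameter $\lambda_n=\lambda$. *)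

(* Defs.v *)
From Stdlib Require Import Reals Lra Lia ClassicalEpsilon.
Open Scope R_scope.

Definition fn (n : nat) (x : R) : R := (1 + x) ^ (S n) / x.

(* mu_n(lambda): the unique mu in (0, 1/n] with f_n(mu) = f_n(lambda)
   (for lambda >= 1/n); chosen via Hilbert's epsilon. *)
Definition mu_n (n : nat) (lam : R) : R :=
  epsilon (inhabits 0)
    (fun m => 0 < m /\ m <= / INR n /\ fn n m = fn n lam).

Definition lambda_nj (n j : nat) (lam : R) : R :=
  Rpower lam (1 - (INR j - 1) / (INR n + 1)) *
  Rpower (mu_n n lam) ((INR j - 1) / (INR n + 1)).

Definition hat_lambda_nj (n j : nat) (lam : R) : R := lambda_nj n (S j) lam.

(* Main.v *)
Require Import Defs.
From Stdlib Require Import Reals Lra Lia ClassicalEpsilon.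
Open Scope R_scope.

Lemma bern (h : R) (k : nat) : -1 <= h -> 1 + INR k * h <= (1+h)^k.
Proof.
  intro Hh. induction k as [|k IH].
  - simpl; lra.
  - rewrite S_INR. simpl. assert (0 <= INR k) by apply pos_INR.
    assert (0 <= 1 + h) by lra.
    assert ((1+h)*(1 + INR k * h) <= (1+h)*(1+h)^k) by (apply Rmult_le_compat_l; lra).
    nra.
Qed.

Lemma fmin (n : nat) (lam : R) : (1 <= n)%nat -> 0 < lam ->
  (1 + / INR n) ^ S n <= (1 + lam) ^ S n / lam / INR n.
Proof.
  intros Hn Hl.
  assert (HN : 1 <= INR n) by (apply (le_INR 1); lia).
  set (N := INR n) in *.
  set (t := N * (1 + lam) / (N + 1)).
  assert (Ht : 0 < t) by (unfold t; apply Rdiv_lt_0_compat; nra).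
  assert (HB := bern (t - 1) (S n) ltac:(lra)).
  rewrite S_INR in HB. fold N in HB.
  assert (E1 : 1 + (N + 1) * (t - 1) = N * lam) by (unfold t; field; lra).
  rewrite E1 in HB. replace (1 + (t - 1)) with t in HB by ring.
  assert (E2 : 1 + lam = t * (1 + / N)) by (unfold t; field; lra).
  rewrite E2, Rpow_mult_distr.
  assert (P : 0 < (1 + / N) ^ S n) by (apply pow_lt; assert (0 < / N) by (apply Rinv_0_lt_compat; lra); lra).
  apply (Rmult_le_reg_r (lam * N)); [nra|].
  replace (t ^ S n * (1 + / N) ^ S n / lam / N * (lam * N)) with (t ^ S n * (1 + / N) ^ S n) by (field; lra).
  set (A := (1 + / N) ^ S n) in *. set (B := t ^ S n) in *.
  assert (0 <= (B - N*lam) * A) by (apply Rmult_le_pos; lra). nra.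
Qed.

Lemma mu_exists (n : nat) (lam : R) : (1 <= n)%nat -> 0 < lam ->
  exists m, 0 < m /\ m <= / INR n /\ fn n m = fn n lam.
Proof.
  intros Hn Hl.
  assert (HN : 1 <= INR n) by (apply (le_INR 1); lia).
  set (c := fn n lam).
  set (g := fun x => (1 + x) ^ S n - c * x).
  assert (Hc : continuity g) by (unfold g; intro; reg).
  assert (Hpos : 0 < / INR n) by (apply Rinv_0_lt_compat; lra).
  assert (g0 : g 0 = 1) by (unfold g; rewrite Rplus_0_r, pow1; ring).
  assert (g1 : g (/ INR n) <= 0).
  { unfold g, c, fn. pose proof (fmin n lam Hn Hl).
    assert ((1 + lam) ^ S n / lam * / INR n = (1 + lam) ^ S n / lam / INR n) by (unfold Rdiv; ring).
    lra. }
  destruct (IVT_cor g 0 (/ INR n) Hc ltac:(lra) ltac:(rewrite g0; lra)) as [z [[Hz1 Hz2] Hz]].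
  assert (z <> 0) by (intro E; subst z; lra).
  exists z. split; [lra|]. split; [lra|].
  unfold g in Hz. unfold fn. fold (fn n lam). fold c.
  apply (Rmult_eq_reg_r z); [|lra]. field_simplify; [lra|lra].
Qed.

Lemma lam_formula (n j : nat) (lam m : R) : (1 <= j)%nat -> 0 < lam -> 0 < m ->
  fn n m = fn n lam ->
  Rpower lam (1 - (INR j - 1) / (INR n + 1)) * Rpower m ((INR j - 1) / (INR n + 1))
  = lam * ((1 + m) / (1 + lam)) ^ (j - 1).
Proof.
  intros Hj Hl Hm Hf.
  set (r := (1 + m) / (1 + lam)).
  assert (Hr : 0 < r) by (unfold r; apply Rdiv_lt_0_compat; lra).
  assert (Em : m = lam * r ^ S n).
  { unfold fn in Hf. unfold r, Rdiv. rewrite Rpow_mult_distr, pow_inv. fold (Rdiv ((1+m)^S n) ((1+lam)^S n)).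
    assert (0 < (1+lam)^S n) by (apply pow_lt; lra).
    assert (0 < (1+m)^S n) by (apply pow_lt; lra).
    apply (Rmult_eq_reg_r (/ m * / lam)).
    2:{ apply Rmult_integral_contrapositive; split; apply Rinv_neq_0_compat; lra. }
    transitivity (/ lam); [field; lra|].
    transitivity ((1 + m) ^ S n / m / (1+lam)^S n); [|field; lra].
    rewrite Hf. field; lra. }
  set (a := (INR j - 1) / (INR n + 1)).
  assert (Ep : 0 < r ^ S n) by (apply pow_lt; lra).
  rewrite Em, <- Rpower_mult_distr by lra.
  rewrite <- Rmult_assoc, <- Rpower_plus.
  replace (1 - a + a) with 1 by ring. rewrite Rpower_1 by lra.
  f_equal.
  rewrite <- (Rpower_pow (S n) r Hr), Rpower_mult.
  rewrite <- Rpower_pow by lra. f_equal.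
  unfold a. rewrite S_INR, minus_INR by lia. simpl (INR 1). field.
  pose proof (pos_INR n); lra.
Qed.

Lemma mu_prop (n : nat) (lam : R) : 0 < lam -> / lam <= INR n ->
  (1 <= n)%nat /\ 0 < mu_n n lam /\ mu_n n lam <= / INR n /\ fn n (mu_n n lam) = fn n lam.
Proof.
  intros Hl Hn.
  assert (1 <= n)%nat.
  { destruct n; [|lia]. simpl in Hn. assert (0 < / lam) by (apply Rinv_0_lt_compat; lra). lra. }
  split; [exact H|]. unfold mu_n.
  apply (epsilon_spec (inhabits 0) (fun m => 0 < m /\ m <= / INR n /\ fn n m = fn n lam)).
  apply mu_exists; assumption.
Qed.

Lemma lam_eq (n j : nat) (lam : R) : (1 <= j)%nat -> 0 < lam -> / lam <= INR n ->
  lambda_nj n j lam = lam * ((1 + mu_n n lam) / (1 + lam)) ^ (j - 1).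
Proof.
  intros Hj Hl Hn. destruct (mu_prop n lam Hl Hn) as [_ [H1 [_ H3]]].
  unfold lambda_nj. apply lam_formula; assumption.
Qed.

Lemma cv_ev (u v : nat -> R) (l : R) : Un_cv u l -> (exists N, forall n, (n >= N)%nat -> v n = u n) -> Un_cv v l.
Proof.
  intros Hu [N HN] eps He. destruct (Hu eps He) as [M HM].
  exists (max N M). intros n Hn. rewrite HN by lia. apply HM. lia.
Qed.

Lemma mu_cv (lam : R) : 0 < lam -> Un_cv (fun n => mu_n n lam) 0.
Proof.
  intros Hl eps He.
  destruct (INR_unbounded (/ eps + / lam)) as [N HN].
  assert (0 < / eps) by (apply Rinv_0_lt_compat; lra).
  assert (0 < / lam) by (apply Rinv_0_lt_compat; lra).
  exists N. intros n Hn.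
  assert (INR N <= INR n) by (apply le_INR; lia).
  destruct (mu_prop n lam Hl ltac:(lra)) as [_ [Hm1 [Hm2 _]]].
  unfold R_dist. rewrite Rminus_0_r, Rabs_pos_eq by lra.
  assert (/ INR n < eps).
  { replace eps with (/ / eps) by (field; lra). apply Rinv_lt_contravar; nra. }
  lra.
Qed.

Theorem corollary2p3 (j : nat) (lam : R) :
  (2 <= j)%nat -> 0 < lam ->
  (forall n : nat, / lam <= INR n -> (j <= n + 2)%nat ->
     lambda_nj n j lam >= lam / (1 + lam) ^ (j - 1)) /\
  Un_cv (fun n => hat_lambda_nj n (j - 1) lam) (lam / (1 + lam) ^ (j - 1)) /\
  Un_cv (fun n => lambda_nj n j lam) (lam / (1 + lam) ^ (j - 1)).
Proof.
  intros Hj Hl.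
  assert (Hcv : Un_cv (fun n => lambda_nj n j lam) (lam / (1 + lam) ^ (j - 1))).
  { set (h := fun x => lam * ((1 + x) / (1 + lam)) ^ (j - 1)).
    assert (Hh : continuity_pt h 0) by (unfold h; reg; lra).
    assert (E : h 0 = lam / (1 + lam) ^ (j - 1)).
    { unfold h. rewrite Rplus_0_r. unfold Rdiv. rewrite Rmult_1_l, pow_inv. ring. }
    rewrite <- E. apply cv_ev with (u := fun n => h (mu_n n lam)).
    - apply continuity_seq; [exact Hh|]. apply mu_cv; exact Hl.
    - destruct (INR_unbounded (/ lam)) as [N HN]. exists N. intros n Hn.
      assert (INR N <= INR n) by (apply le_INR; lia).
      unfold h. apply lam_eq; [lia|lra|lra]. }
  split; [|split].
  - intros n Hn _. rewrite lam_eq by (lia || lra).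
    destruct (mu_prop n lam Hl Hn) as [_ [Hmu _]].
    apply Rle_ge. unfold Rdiv at 1. rewrite <- pow_inv.
    apply Rmult_le_compat_l; [lra|]. apply pow_incr. split.
    + left; apply Rinv_0_lt_compat; lra.
    + unfold Rdiv. rewrite <- (Rmult_1_l (/ (1 + lam))) at 1. apply Rmult_le_compat_r; [left; apply Rinv_0_lt_compat; lra|lra].
  - unfold hat_lambda_nj. replace (S (j - 1)) with j by lia. exact Hcv.
  - exact Hcv.
Qed.
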